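(* Let $P=\bigsqcup_{n\ge1}P_n$ with the operations $\dashv,\vdash,\perp$ described in the context, and extend these operations bilinearly to the graded vector space $\bigoplus_{n\ge1}K[P_n]$, where $K[P_n]$ is the $K$-vector space with basis $P_n$. Then $\bigl(\bigoplus_{n\ge1}K[P_n];\dashv,\vdash,\perp\bigr)$ is an associative trialgebra. Moreover, it is the free associative trialgebra on one generator $\{0\}\in P_1$: for every associative trialgebra $A$ and every $a\in A$ there is a unique morphism of associative trialgebras $\bigoplus_{n\ge1}K[P_n]\to A$ sending $\{0\}$ to $a$.
   Context: Let $K$ be a field. An associative trialgebra is a $K$-vector space $A$ with three bilinear operations $\dashv$ (left), $\vdash$ (right), $\perp$ (middle), $A\otimes A\to A$, satisfying for all $x,y,z\in A$ the following 11 relations: (1) $(x\dashv y)\dashv z=x\dashv(y\dashv z)$; (2) $(x\dashv y)\dashv z=x\dashv(y\vdash z)$; (3) $(x\vdash y)\dashv z=x\vdash(y\dashv z)$; (4) $(x\dashv y)\vdash z=x\vdash(y\vdash z)$; (5) $(x\vdash y)\vdash z=x\vdash(y\vdash z)$; (6) $(x\dashv y)\dashv z=x\dashv(y\perp z)$; (7) $(x\perp y)\dashv z=x\perp(y\dashv z)$; (8) $(x\dashv y)\perp z=x\perp(y\vdash z)$; (9) $(x\vdash y)\perp z=x\vdash(y\perp z)$; (10) $(x\perp y)\vdash z=x\vdash(y\vdash z)$; (11) $(x\perp y)\perp z=x\perp(y\perp z)$. A morphism of associative trialgebras is a linear map preserving all three operations. For $n\ge1$ let $[n-1]=\{0,1,\dots,n-1\}$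 and let $P_n$ be the set of nonempty subsets of $[n-1]$. For $p,q\ge1$ let $\mathrm{bij}:[p-1]\sqcup[q-1]\to[p+q-1]$ be the bijection which is the identity on the first copy and sends $k$ in the second copy to $p+k$. For $X\in P_p$ and $Y\in P_q$ define elements of $P_{p+q}$: - $X\dashv Y=\mathrm{bij}(X)$, the image of $X$ viewed in the first copy; - $X\vdash Y=\mathrm{bij}(Y)$, the image of $Y$ viewed in the second copy; - $X\perp Y=\mathrm{bij}(X\sqcup Y)$. *)

(* Defs.v *)
From HB Require Import structures.
From mathcomp Require Import all_boot all_order all_algebra.
From mathcomp Require Import finmap.
From mathcomp Require Import monalg.

Set Implicit Arguments.
Unset Strict Implicit.
Unset Printing Implicit Defensive.

Import GRing.Theory.
Local Open Scope ring_scope.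

Section Trialgebra.
Variables (K : fieldType) (A : lmodType K).

Definition bilinear_op (op : A -> A -> A) : Prop :=
  (forall (c : K) (x y z : A), op (c *: x + y) z = c *: op x z + op y z) /\
  (forall (c : K) (x y z : A), op x (c *: y + z) = c *: op x y + op x z).

(* l = "dashv" (left), r = "vdash" (right), m = "perp" (middle) *)
Definition is_trialgebra (l r m : A -> A -> A) : Prop :=
  bilinear_op l /\ bilinear_op r /\ bilinear_op m /\
  forall x y z : A,
      l (l x y) z = l x (l y z) /\         (* (1)  *)
      l (l x y) z = l x (r y z) /\         (* (2)  *)
      l (r x y) z = r x (l y z) /\         (* (3)  *)
      r (l x y) z = r x (r y z) /\         (* (4)  *)
      r (r x y) z = r x (r y z) /\         (* (5)  *)
      l (l x y) z = l x (m y z) /\         (* (6)  *)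
      l (m x y) z = m x (l y z) /\         (* (7)  *)
      m (l x y) z = m x (r y z) /\         (* (8)  *)
      m (r x y) z = r x (m y z) /\         (* (9)  *)
      r (m x y) z = r x (r y z) /\         (* (10) *)
      m (m x y) z = m x (m y z).            (* (11) *)

End Trialgebra.

Definition trialg_morphism (K : fieldType) (A B : lmodType K)
    (lA rA mA : A -> A -> A) (lB rB mB : B -> B -> B) (f : A -> B) : Prop :=
  [/\ forall (c : K) (x y : A), f (c *: x + y) = c *: f x + f y,
      forall x y : A, f (lA x y) = lB (f x) (f y),
      forall x y : A, f (rA x y) = rB (f x) (f y) &
      forall x y : A, f (mA x y) = mB (f x) (f y)].

(* The set P = disjoint union of the P_n, n >= 1, where P_n is the set of
   nonempty subsets of [n-1] = {0,...,n-1}.            *)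

Definition inP (x : nat * {fset nat}) : bool :=
  [&& (0 < x.1)%N, x.2 != fset0 & [forall k : x.2, (val k < x.1)%N]].

Definition P := {x : nat * {fset nat} | inP x}.
HB.instance Definition _ := [Choice of P by <:].

Definition Pdeg (X : P) : nat := (val X).1.
Definition Pset (X : P) : {fset nat} := (val X).2.

Lemma inP_gen : inP (1%N, [fset 0%N]%fset).
Proof.
rewrite /inP /=; apply/andP; split.
  by apply/fset0Pn; exists 0%N; rewrite inE.
apply/forallP => k; have := fsvalP k; rewrite inE => /eqP Hk.
by rewrite /= Hk.
Qed.
Definition Pgen : P := Sub (1%N, [fset 0%N]%fset) inP_gen.

(* shift of a set by p: image of the second copy under bij *)
Definition shiftf (p : nat) (Y : {fset nat}) : {fset nat} :=
  [fset (p + k)%N | k in Y]%fset.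

Lemma inP_l (X Y : P) :
  inP ((Pdeg X + Pdeg Y)%N, Pset X).
Proof.
case: X Y => [[p X] HX] [[q Y] HY]; rewrite /Pdeg /Pset /=.
case/and3P: HX => p0 X0 /forallP HX; case/and3P: HY => q0 _ _.
rewrite /inP /= X0 addn_gt0 p0 /=; apply/forallP => k.
by apply: (leq_trans (HX k)); rewrite leq_addr.
Qed.

Lemma inP_r (X Y : P) :
  inP ((Pdeg X + Pdeg Y)%N, shiftf (Pdeg X) (Pset Y)).
Proof.
case: X Y => [[p X] HX] [[q Y] HY]; rewrite /Pdeg /Pset /=.
case/and3P: HX => p0 _ _; case/and3P: HY => q0 Y0 /forallP HY.
rewrite /inP /= addn_gt0 p0 /=; apply/andP; split.
  case/fset0Pn: Y0 => y Hy; apply/fset0Pn; exists (p + y)%N.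
  by apply/imfsetP; exists y.
apply/forallP => -[k /imfsetP [y /= Hy ->]] /=.
by rewrite ltn_add2l (HY [` Hy]%fset).
Qed.

Lemma inP_m (X Y : P) :
  inP ((Pdeg X + Pdeg Y)%N, (Pset X `|` shiftf (Pdeg X) (Pset Y))%fset).
Proof.
have /and3P [H1 H2 /forallP H3] := inP_l X Y.
have /and3P [_ H5 /forallP H6] := inP_r X Y.
rewrite /inP /= H1 /=; apply/andP; split.
  by apply: contra H2; rewrite fsetU_eq0 => /andP [].
apply/forallP => -[k /fsetUP [Hk|Hk]] /=.
  exact: (H3 [` Hk]%fset).
exact: (H6 [` Hk]%fset).
Qed.

(* X -| Y = bij(X), X |- Y = bij(Y), X _|_ Y = bij(X u Y), in P_{p+q} *)
Definition Pl (X Y : P) : P := Sub _ (inP_l X Y).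
Definition Pr (X Y : P) : P := Sub _ (inP_r X Y).
Definition Pm (X Y : P) : P := Sub _ (inP_m X Y).

(* The graded vector space  (+)_{n>=1} K[P_n] = K[P], the K-vector space
   with basis P, realised as finitely supported functions P -> K.
   Operations are the bilinear extensions of Pl, Pr, Pm.                *)

Definition KP (K : fieldType) := {malg K[P]}.

Definition bilin_ext (K : fieldType) (o : P -> P -> P) (x y : {malg K[P]})
  : {malg K[P]} :=
  \sum_(a <- msupp x) \sum_(b <- msupp y) (x@_a * y@_b) *: << o a b >>.

Definition KP_l (K : fieldType) := @bilin_ext K Pl.
Definition KP_r (K : fieldType) := @bilin_ext K Pr.
Definition KP_m (K : fieldType) := @bilin_ext K Pm.

Definition KP_gen (K : fieldType) : {malg K[P]} := << Pgen >>.

(* Main.v *)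
Require Import Defs.
From HB Require Import structures.
From mathcomp Require Import all_boot all_order all_algebra.
From mathcomp Require Import finmap.
From mathcomp Require Import monalg.
From mathcomp Require Import zify.
Set Implicit Arguments.
Unset Strict Implicit.
Unset Printing Implicit Defensive.
Import GRing.Theory.
Local Open Scope ring_scope.
Local Open Scope fset_scope.

Lemma Peq (X Y : P) : Pdeg X = Pdeg Y -> Pset X = Pset Y -> X = Y.
Proof.
move=> h1 h2; apply: val_inj.
by rewrite [val X]surjective_pairing [val Y]surjective_pairing -/(Pdeg X) -/(Pset X) h1 h2.
Qed.

Lemma in_shift p Y k : (k \in shiftf p Y) = (p <= k)%N && (k - p \in Y)%N.
Proof.
apply/imfsetP/andP => [[j /= Hj ->]|[H1 H2]].
  by rewrite leq_addr addKn.
by exists (k - p)%N => //; rewrite subnKC.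
Qed.

Lemma shiftfA p q Z : shiftf p (shiftf q Z) = shiftf (p + q) Z.
Proof.
apply/fsetP => k; rewrite !in_shift.
case: (leqP p k) => H1 /=; last by case: (leqP (p+q) k) => //; lia.
rewrite subnDA leq_subRL //.
Qed.

Lemma shiftfU p Y Z : shiftf p (Y `|` Z) = shiftf p Y `|` shiftf p Z.
Proof. by apply/fsetP => k; rewrite !(in_fsetU, in_shift) andb_orr. Qed.

Lemma PdegL X Y : Pdeg (Pl X Y) = (Pdeg X + Pdeg Y)%N. Proof. by []. Qed.
Lemma PdegR X Y : Pdeg (Pr X Y) = (Pdeg X + Pdeg Y)%N. Proof. by []. Qed.
Lemma PdegM X Y : Pdeg (Pm X Y) = (Pdeg X + Pdeg Y)%N. Proof. by []. Qed.
Lemma PsetL X Y : Pset (Pl X Y) = Pset X. Proof. by []. Qed.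
Lemma PsetR X Y : Pset (Pr X Y) = shiftf (Pdeg X) (Pset Y). Proof. by []. Qed.
Lemma PsetM X Y : Pset (Pm X Y) = Pset X `|` shiftf (Pdeg X) (Pset Y). Proof. by []. Qed.

Definition Psimp := (PdegL, PdegR, PdegM, PsetL, PsetR, PsetM, shiftfA, shiftfU, addnA, fsetUA).

Lemma P_rels (x y z : P) :
      Pl (Pl x y) z = Pl x (Pl y z) /\
      Pl (Pl x y) z = Pl x (Pr y z) /\
      Pl (Pr x y) z = Pr x (Pl y z) /\
      Pr (Pl x y) z = Pr x (Pr y z) /\
      Pr (Pr x y) z = Pr x (Pr y z) /\
      Pl (Pl x y) z = Pl x (Pm y z) /\
      Pl (Pm x y) z = Pm x (Pl y z) /\
      Pm (Pl x y) z = Pm x (Pr y z) /\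
      Pm (Pr x y) z = Pr x (Pm y z) /\
      Pr (Pm x y) z = Pr x (Pr y z) /\
      Pm (Pm x y) z = Pm x (Pm y z).
Proof.
by do !split; apply: Peq; rewrite !Psimp.
Qed.
Local Close Scope fset_scope.

Section Lin.
Variables (K : fieldType) (V : lmodType K).

Definition Lext (F : P -> V) (g : {malg K[P]}) : V :=
  \sum_(k <- msupp g) g@_k *: F k.

Lemma Lext_w F g (d : {fset P}) : (msupp g `<=` d)%fset ->
  Lext F g = \sum_(k <- d) g@_k *: F k.
Proof.
move=> H; rewrite /Lext (big_fset_incl _ H) //= => k _ /mcoeff_outdom ->.
by rewrite scale0r.
Qed.

Lemma Lext_lin F c x y : Lext F (c *: x + y) = c *: Lext F x + Lext F y.
Proof.
have Hx : (msupp x `<=` msupp x `|` msupp y)%fset by rewrite fsubsetUl.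
have Hy : (msupp y `<=` msupp x `|` msupp y)%fset by rewrite fsubsetUr.
have Hxy : (msupp (c *: x + y) `<=` msupp x `|` msupp y)%fset.
  apply: fsubset_trans (msuppD_le _ _) _.
  by apply: fsetSU; apply: msuppZ_le.
rewrite (Lext_w F Hx) (Lext_w F Hy) (Lext_w F Hxy) scaler_sumr -big_split /=.
apply: eq_bigr => k _; by rewrite mcoeffD mcoeffZ scalerDl scalerA.
Qed.

Lemma Lext0 F : Lext F 0 = 0.
Proof. by rewrite /Lext msupp0 big_nil. Qed.

Lemma LextD F x y : Lext F (x + y) = Lext F x + Lext F y.
Proof. by have := Lext_lin F 1 x y; rewrite !scale1r. Qed.

Lemma LextZ F c x : Lext F (c *: x) = c *: Lext F x.
Proof. by rewrite -(addr0 (c *: x)) Lext_lin Lext0 addr0. Qed.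

Lemma LextU F u : Lext F << u >> = F u.
Proof.
have H := @msuppU_le P K u 1.
rewrite (Lext_w F H) big_seq_fset1 mcoeffUU scale1r //.
Qed.

Lemma Lext_ext F G x : (forall k, F k = G k) -> Lext F x = Lext G x.
Proof. by move=> H; apply: eq_bigr => k _; rewrite H. Qed.

Lemma Lext_linF (F G : P -> V) c x :
  Lext (fun k => c *: F k + G k) x = c *: Lext F x + Lext G x.
Proof.
rewrite /Lext scaler_sumr -big_split /=; apply: eq_bigr => k _.
by rewrite scalerDr !scalerA mulrC.
Qed.

End Lin.

Lemma monalgUZ (K : fieldType) (c : K) (k : P) :
  << c *g k >> = c *: (<< k >> : {malg K[P]}).
Proof.
apply/malgP => j; rewrite mcoeffZ !mcoeffU.
by case: (k == j); rewrite ?mulr1 ?mulr0.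
Qed.

Lemma Lext_expand (K : fieldType) (x : {malg K[P]}) :
  Lext (fun k => << k >> : {malg K[P]}) x = x.
Proof.
rewrite {2}(monalgE x) /Lext; apply: eq_bigr => k _.
by rewrite (monalgUZ (x@_k)).

Qed.


Definition islin (K : fieldType) (V W : lmodType K) (h : V -> W) :=
  forall c x y, h (c *: x + y) = c *: h x + h y.

Lemma islin0 (K : fieldType) (V W : lmodType K) (h : V -> W) : islin h -> h 0 = 0.
Proof.
move=> H; have E := H 1 0 0; rewrite !scale1r addr0 in E.
by apply: (@addrI _ (h 0)); rewrite addr0 -E.
Qed.

Lemma islin_sum (K : fieldType) (V W : lmodType K) (h : V -> W) :
  islin h -> forall (s : seq P) (c : P -> K) (v : P -> V),
  h (\sum_(k <- s) c k *: v k) = \sum_(k <- s) c k *: h (v k).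
Proof.
move=> H; elim => [|k s IH] c v; first by rewrite !big_nil islin0.
by rewrite !big_cons H IH.
Qed.

Lemma islin_Lext (K : fieldType) (V W : lmodType K) (h : V -> W) F x :
  islin h -> h (Lext F x) = Lext (fun k => h (F k)) x.
Proof. by move=> H; rewrite /Lext islin_sum. Qed.

Section KPtri.
Variable K : fieldType.
Implicit Types x y z : {malg K[P]}.

Lemma bilin_Lext o x y : bilin_ext o x y =
  Lext (fun a => Lext (fun b => << o a b >> : {malg K[P]}) y) x.
Proof.
rewrite /bilin_ext /Lext; apply: eq_bigr => a _; rewrite scaler_sumr.
by apply: eq_bigr => b _; rewrite scalerA.
Qed.

Lemma bilin_Lext2 o x y : bilin_ext o x y =
  Lext (fun b => Lext (fun a => << o a b >> : {malg K[P]}) x) y.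
Proof.
rewrite /bilin_ext /Lext exchange_big /=; apply: eq_bigr => b _; rewrite scaler_sumr.
by apply: eq_bigr => a _; rewrite scalerA mulrC.
Qed.

Lemma bilin_op_ext o : bilinear_op (@bilin_ext K o).
Proof.
split => c x y z.
  by rewrite !bilin_Lext Lext_lin.
by rewrite !bilin_Lext2 Lext_lin.
Qed.

Lemma islin_l o z : islin (fun w => @bilin_ext K o w z).
Proof. by move=> c x y; rewrite !bilin_Lext Lext_lin. Qed.

Lemma islin_L (F : P -> {malg K[P]}) : islin (Lext F).
Proof. by move=> c x y; rewrite Lext_lin. Qed.

Lemma bilin_assoc o1 o2 o3 o4 :
  (forall a b c, o2 (o1 a b) c = o3 a (o4 b c)) ->
  forall x y z, bilin_ext o2 (bilin_ext o1 x y) z = bilin_ext o3 x (@bilin_ext K o4 y z).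
Proof.
move=> H x y z.
rewrite [bilin_ext o1 x y]bilin_Lext (islin_Lext _ _ (islin_l o2 z)).
rewrite [bilin_ext o3 x _]bilin_Lext; apply: Lext_ext => a.
rewrite (islin_Lext _ _ (islin_l o2 z)) [bilin_ext o4 y z]bilin_Lext.
rewrite (islin_Lext _ _ (islin_L _)); apply: Lext_ext => b.
rewrite bilin_Lext LextU (islin_Lext _ _ (islin_L _)); apply: Lext_ext => c.
by rewrite LextU H.
Qed.

Lemma KP_tri : is_trialgebra (@KP_l K) (@KP_r K) (@KP_m K).
Proof.
do 3 (split; first exact: bilin_op_ext).
move=> x y z.
by do !split; apply: bilin_assoc => a b c; have := P_rels a b c; intuition.
Qed.

End KPtri.

Local Open Scope fset_scope.
Definition sdown (X : {fset nat}) : {fset nat} := [fset k.-1 | k in X & (0 < k)%N].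

Lemma in_sdown X j : (j \in sdown X) = (j.+1 \in X).
Proof.
apply/imfsetP/idP => [[k /= /andP [Hk Hk0] ->]|H].
  by rewrite prednK.
by exists j.+1 => //=; rewrite !inE H.
Qed.

Lemma sdown0 : sdown fset0 = fset0.
Proof. by apply/fsetP => j; rewrite in_sdown !inE. Qed.

Lemma sdown_shift1 S : sdown (shiftf 1 S) = S.
Proof. by apply/fsetP => j; rewrite in_sdown in_shift subSS subn0. Qed.

Lemma sdown_g S : sdown ([fset 0%N] `|` shiftf 1 S) = S.
Proof. by apply/fsetP => j; rewrite in_sdown in_fsetU in_shift inE subSS subn0. Qed.

Lemma sdown_1 : sdown [fset 0%N] = fset0.
Proof. by apply/fsetP => j; rewrite in_sdown !inE. Qed.

Lemma Pdeg_gt0 (Z : P) : (0 < Pdeg Z)%N.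
Proof. by case/and3P: (valP Z). Qed.

Lemma Pset_neq0 (Z : P) : Pset Z != fset0.
Proof. by case/and3P: (valP Z). Qed.

Lemma Pset_lt (Z : P) k : k \in Pset Z -> (k < Pdeg Z)%N.
Proof.
move=> Hk; have /and3P [_ _ /forallP H] := valP Z.
exact: (H [` Hk]).
Qed.

Lemma PdegG : Pdeg Pgen = 1%N. Proof. by []. Qed.
Lemma PsetG : Pset Pgen = [fset 0%N]. Proof. by []. Qed.

Lemma Pdeg1 (X : P) : Pdeg X = 1%N -> X = Pgen.
Proof.
move=> H; apply: Peq => //; rewrite PsetG.
apply/fsetP => k; rewrite inE; apply/idP/eqP => [Hk|->].
  by have := Pset_lt Hk; rewrite H; case: k {Hk}.
have /fset0Pn [j Hj] := Pset_neq0 X.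
by have := Pset_lt Hj; rewrite H; case: j Hj.
Qed.

Lemma decomp (X : P) : (1 < Pdeg X)%N -> exists Y : P,
  (Pdeg Y < Pdeg X)%N /\ (X = Pl Pgen Y \/ X = Pr Pgen Y \/ X = Pm Pgen Y).
Proof.
move=> H.
set S' := sdown (Pset X).
set T := if S' == fset0 then [fset 0%N] else S'.
have HT : inP ((Pdeg X).-1, T).
  rewrite /inP /= -ltnS prednK ?(ltnW H) // H /=; apply/andP; split.
    rewrite /T; case: ifP => [_|/negbT //]; apply/fset0Pn; exists 0%N; by rewrite inE.
  apply/forallP => -[k /= Hk]; move: Hk; rewrite /T; case: ifP => _.
    by rewrite inE => /eqP ->; rewrite -ltnS prednK ?(ltnW H).
  rewrite in_sdown => /Pset_lt; by case: (Pdeg X) H.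
pose Y : P := Sub _ HT.
have degY : Pdeg Y = (Pdeg X).-1 by [].
have degX : Pdeg X = (1 + Pdeg Y)%N by rewrite degY add1n prednK ?(ltnW H).
exists Y; split; first by rewrite degY; case: (Pdeg X) H.
have setY : Pset Y = T by [].
case: (eqVneq S' fset0) => HS.
  left; apply: Peq; rewrite ?PdegL ?PsetL // PsetG.
  apply/fsetP => k; rewrite inE; apply/idP/eqP => [Hk|->].
    case: k Hk => // k Hk; have : k \in S' by rewrite in_sdown.
    by rewrite HS inE.
  have /fset0Pn [j Hj] := Pset_neq0 X.
  case: j Hj => // j Hj; have : j \in S' by rewrite in_sdown.
  by rewrite HS inE.
have setY' : Pset Y = S' by rewrite setY /T (negbTE HS).
right; case H0 : (0%N \in Pset X).
  right; apply: Peq; rewrite ?PdegM ?PsetM // setY' PdegG.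
  apply/fsetP => k; rewrite in_fsetU in_shift inE.
  case: k => [|k]; first by rewrite H0.
  by rewrite /= subSS subn0 in_sdown.
left; apply: Peq; rewrite ?PdegR ?PsetR // setY' PdegG.
apply/fsetP => k; rewrite in_shift.
case: k => [|k]; first by rewrite H0.
by rewrite /= subSS subn0 in_sdown.
Qed.
Local Close Scope fset_scope.

Section Free.
Variables (K : fieldType) (A : lmodType K) (l r m : A -> A -> A).
Hypothesis HT : is_trialgebra l r m.
Variable a : A.

Fixpoint phi (n : nat) (X : {fset nat}) : A :=
  match n with
  | 0 => a
  | n'.+1 => if sdown X == fset0 then l a (phi n' (sdown X))
             else if 0%N \in X then m a (phi n' (sdown X))
             else r a (phi n' (sdown X))
  end.

Definition vphi (Z : P) : A := phi (Pdeg Z).-1 (Pset Z).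

Lemma Arels x y z :
      l (l x y) z = l x (l y z) /\
      l (l x y) z = l x (r y z) /\
      l (r x y) z = r x (l y z) /\
      r (l x y) z = r x (r y z) /\
      r (r x y) z = r x (r y z) /\
      l (l x y) z = l x (m y z) /\
      l (m x y) z = m x (l y z) /\
      m (l x y) z = m x (r y z) /\
      m (r x y) z = r x (m y z) /\
      r (m x y) z = r x (r y z) /\
      m (m x y) z = m x (m y z).
Proof. by case: HT => _ [_ [_ H]]; apply: H. Qed.

Lemma l_indep n S u : l u (phi n S) = l u (phi n fset0).
Proof.
elim: n S u => [//|n IH] S u /=.
rewrite sdown0 eqxx.
have [E1 [E2 [_ [_ [_ [E6 _]]]]]] := Arels u a (phi n fset0).
rewrite -E1.
case: ifP => _; last case: ifP => _.
- have [E1' _] := Arels u a (phi n (sdown S)).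
  by rewrite -E1' IH.
- have [_ [_ [_ [_ [_ [E6' _]]]]]] := Arels u a (phi n (sdown S)).
  by rewrite -E6' IH.
- have [_ [E2' _]] := Arels u a (phi n (sdown S)).
  by rewrite -E2' IH.
Qed.

Lemma vphiG : vphi Pgen = a. Proof. by []. Qed.

Lemma predeg Z : (1 + Pdeg Z).-1 = (Pdeg Z).-1.+1.
Proof. by rewrite add1n /= prednK // Pdeg_gt0. Qed.

Lemma vphi_gl Z : vphi (Pl Pgen Z) = l a (vphi Z).
Proof.
rewrite /vphi PdegL PsetL PdegG PsetG predeg /= sdown_1 eqxx.
by rewrite (l_indep _ (Pset Z)).
Qed.

Lemma vphi_gr Z : vphi (Pr Pgen Z) = r a (vphi Z).
Proof.
rewrite /vphi PdegR PsetR PdegG predeg /= sdown_shift1 (negbTE (Pset_neq0 Z)).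
by rewrite in_shift.
Qed.

Lemma vphi_gm Z : vphi (Pm Pgen Z) = m a (vphi Z).
Proof.
rewrite /vphi PdegM PsetM PdegG PsetG predeg /= sdown_g (negbTE (Pset_neq0 Z)).
by rewrite in_fsetU inE.
Qed.

Lemma vphi_morph n (X Y : P) : (Pdeg X <= n)%N ->
  [/\ vphi (Pl X Y) = l (vphi X) (vphi Y),
      vphi (Pr X Y) = r (vphi X) (vphi Y) &
      vphi (Pm X Y) = m (vphi X) (vphi Y)].
Proof.
elim: n X Y => [|n IH] X Y HX; first by have := Pdeg_gt0 X; rewrite ltnNge HX.
case: (ltngtP (Pdeg X) 1) => H1.
- by have := Pdeg_gt0 X; rewrite ltnNge -ltnS H1.
- have [X' [HX' [->|[->|->]]]] := decomp H1;
  (have HX'n : (Pdeg X' <= n)%N by rewrite -ltnS (leq_trans HX' HX));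
  have := P_rels Pgen X' Y; have := Arels a (vphi X') (vphi Y);
  have [I1 I2 I3] := IH X' Y HX'n;
  move=> [A1 [A2 [A3 [A4 [A5 [A6 [A7 [A8 [A9 [A10 A11]]]]]]]]]];
  move=> [P1 [P2 [P3 [P4 [P5 [P6 [P7 [P8 [P9 [P10 P11]]]]]]]]]];
  rewrite ?vphi_gl ?vphi_gr ?vphi_gm.
  + by split; [rewrite P1 vphi_gl I1 A1 | rewrite P4 vphi_gr I2 A4 | rewrite P8 vphi_gm I2 A8].
  + by split; [rewrite P3 vphi_gr I1 A3 | rewrite P5 vphi_gr I2 A5 | rewrite P9 vphi_gr I3 A9].
  + by split; [rewrite P7 vphi_gm I1 A7 | rewrite P10 vphi_gr I2 A10 | rewrite P11 vphi_gm I3 A11].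
- by rewrite (Pdeg1 H1) vphiG vphi_gl vphi_gr vphi_gm.
Qed.

End Free.

Lemma islin_LG (K : fieldType) (V : lmodType K) (F : P -> V) : islin (Lext F).
Proof. by move=> c x y; rewrite Lext_lin. Qed.

Lemma bilinop_islin_l (K : fieldType) (A : lmodType K) (op : A -> A -> A) v :
  bilinear_op op -> islin (fun w => op w v).
Proof. by case=> H _ c x y; apply: H. Qed.

Lemma bilinop_islin_r (K : fieldType) (A : lmodType K) (op : A -> A -> A) u :
  bilinear_op op -> islin (op u).
Proof. by case=> _ H c x y; apply: H. Qed.

Lemma Lext_morph (K : fieldType) (A : lmodType K) (op : A -> A -> A) (o : P -> P -> P)
  (F : P -> A) : bilinear_op op -> (forall X Y, F (o X Y) = op (F X) (F Y)) ->
  forall x y : {malg K[P]}, Lext F (bilin_ext o x y) = op (Lext F x) (Lext F y).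
Proof.
move=> Hop HF x y.
rewrite bilin_Lext (islin_Lext _ _ (islin_LG F)).
rewrite (islin_Lext _ _ (bilinop_islin_l _ Hop)); apply: Lext_ext => X.
rewrite (islin_Lext _ _ (islin_LG F)) (islin_Lext _ _ (bilinop_islin_r _ Hop)).
by apply: Lext_ext => Y; rewrite LextU HF.
Qed.

Lemma bilinU (K : fieldType) o (X Y : P) :
  bilin_ext o (<< X >> : {malg K[P]}) << Y >> = << o X Y >>.
Proof. by rewrite bilin_Lext !LextU. Qed.

Theorem theorem1p7 (K : fieldType) :
  is_trialgebra (@KP_l K) (@KP_r K) (@KP_m K) /\
  forall (A : lmodType K) (lA rA mA : A -> A -> A),
    is_trialgebra lA rA mA ->
    forall a : A,
      exists f : {malg K[P]} -> A,
        [/\ trialg_morphism (@KP_l K) (@KP_r K) (@KP_m K) lA rA mA f,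
            f (KP_gen K) = a &
            forall g : {malg K[P]} -> A,
              trialg_morphism (@KP_l K) (@KP_r K) (@KP_m K) lA rA mA g ->
              g (KP_gen K) = a -> forall x, g x = f x].
Proof.
split; first exact: KP_tri.
move=> A lA rA mA HT a.
have [Bl [Br [Bm _]]] := HT.
exists (Lext (vphi lA rA mA a)); split.
- split => [c x y|x y|x y|x y]; first exact: Lext_lin.
  + by apply: Lext_morph => // X Y; case: (vphi_morph HT a Y (leqnn (Pdeg X))).
  + by apply: Lext_morph => // X Y; case: (vphi_morph HT a Y (leqnn (Pdeg X))).
  + by apply: Lext_morph => // X Y; case: (vphi_morph HT a Y (leqnn (Pdeg X))).
- by rewrite /KP_gen LextU.
move=> g [Hlin Hl Hr Hm] Hg x.
have Hb : forall n (X : P), (Pdeg X <= n)%N -> g << X >> = vphi lA rA mA a X.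
  elim => [|n IH] X HX; first by have := Pdeg_gt0 X; rewrite ltnNge HX.
  case: (ltngtP (Pdeg X) 1) => H1.
  - by have := Pdeg_gt0 X; rewrite ltnNge -ltnS H1.
  - have [Y [HY [->|[->|->]]]] := decomp H1;
    (have HYn : (Pdeg Y <= n)%N by rewrite -ltnS (leq_trans HY HX)).
    + by rewrite -(bilinU K) Hl Hg IH // vphi_gl.
    + by rewrite -(bilinU K) Hr Hg IH // vphi_gr.
    + by rewrite -(bilinU K) Hm Hg IH // vphi_gm.
  - by rewrite (Pdeg1 H1) Hg.
rewrite -{1}(Lext_expand x) (islin_Lext _ _ Hlin).
by apply: Lext_ext => X; apply: (Hb _ X (leqnn _)).
Qed.
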